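(* Let $f$ be any periodic traveling wave (sub- or superluminal, librational or rotational). There exists $\mu_*<0$ such that $|\Delta_q|>2$ at $\mu=\mu_*$; consequently there exist two nonzero imaginary points $\lambda=\pm i\beta_*$, $\beta_*>0$, with $\mu_*=(i\gamma\beta_* )^2$, that are not in $\sigma(\mathrm{Q})$.
   Context: A traveling wave of speed $c$ ($c^2\neq1$) is a real solution $f$ of $(c^2-1)f''+\sin f=0$, with energy $E$ given by $\tfrac12(c^2-1)(f')^2+1-\cos f=E$; it is subluminal if $c^2<1$, superluminal if $c^2>1$; periodic traveling waves are librational ($0<E<2$) or rotational ($E<0$ if $c^2<1$, $E>2$ if $c^2>1$), with fundamental period $T$ (smallest $T>0$ with $f(z+T)=f(z)\pmod{2\pi}$). Let $\gamma=1/(c^2-1)$. Equation (Q): $q''+\gamma\cos(f(z))q=\mu q$, with $\mu=\gamma^2\lambda^2$. Writing (Q) as a first-order system for $(q,q')$ with fundamental matrix $F_q(z)$, $F_q(0)=I$, $\Delta_q$ denotes the trace of the monodromy matrix $F_q(T)$, viewed as a function of $\mu$. $\sigma(\mathrm{Q})$ is the set of $\lambda\in\mathbb{C}$ for which (Q) with $\mu=\gamma^2\lambda^2$ has a nontrivial solution bounded on $\mathbb{R}$. *)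

(* Defs.v *)
From Stdlib Require Import Reals ZArith.
From Coquelicot Require Import Coquelicot.
Open Scope R_scope.

Definition traveling_wave (c : R) (f : R -> R) : Prop :=
  c ^ 2 <> 1 /\
  (forall z, ex_derive f z) /\ (forall z, ex_derive (Derive f) z) /\
  (forall z, (c ^ 2 - 1) * Derive_n f 2 z + sin (f z) = 0).

Definition has_energy (c : R) (f : R -> R) (E : R) : Prop :=
  forall z, / 2 * (c ^ 2 - 1) * (Derive f z) ^ 2 + 1 - cos (f z) = E.

Definition is_period_mod2pi (f : R -> R) (T : R) : Prop :=
  0 < T /\ forall z, exists k : Z, f (z + T) = f z + 2 * PI * IZR k.

Definition fundamental_period (f : R -> R) (T : R) : Prop :=
  is_period_mod2pi f T /\ forall T', 0 < T' < T -> ~ is_period_mod2pi f T'.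

Definition librational (E : R) : Prop := 0 < E < 2.
Definition rotational (c E : R) : Prop :=
  (c ^ 2 < 1 /\ E < 0) \/ (c ^ 2 > 1 /\ E > 2).

Definition gam (c : R) : R := / (c ^ 2 - 1).

Definition solQ_R (c : R) (f : R -> R) (mu : R) (q p : R -> R) : Prop :=
  forall z, is_derive q z (p z) /\
            is_derive p z ((mu - gam c * cos (f z)) * q z).

(* d = Delta_q(mu) = trace of the monodromy matrix F_q(T) *)
Definition Delta_q (c : R) (f : R -> R) (T mu d : R) : Prop :=
  exists q1 p1 q2 p2 : R -> R,
    solQ_R c f mu q1 p1 /\ solQ_R c f mu q2 p2 /\
    q1 0 = 1 /\ p1 0 = 0 /\ q2 0 = 0 /\ p2 0 = 1 /\
    d = q1 T + p2 T.

Definition solQ_C (c : R) (f : R -> R) (mu : C) (q p : R -> C) : Prop :=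
  forall z, is_derive q z (p z) /\
            is_derive p z (Cmult (Cminus mu (RtoC (gam c * cos (f z)))) (q z)).

Definition in_sigmaQ (c : R) (f : R -> R) (lam : C) : Prop :=
  exists q p : R -> C,
    solQ_C c f (Cmult (RtoC (gam c ^ 2)) (Cmult lam lam)) q p /\
    (exists z, q z <> RtoC 0) /\
    (exists M, forall z, Cmod (q z) <= M).

(* Main.v *)
Require Import Defs.
From Stdlib Require Import Reals ZArith Lra Lia.
From Coquelicot Require Import Coquelicot.
Open Scope R_scope.

Lemma is_derive_fst (q : R -> C) z (l : C) :
  is_derive q z l -> is_derive (fun t => fst (q t)) z (fst l).
Proof.
  intros H. unfold is_derive in *.
  eapply filterdiff_ext_lin.
  - apply (filterdiff_comp' q (fun t : prod_NormedModule R_AbsRing R_NormedModule R_NormedModule => fst t) z _ (fun t : prod_NormedModule R_AbsRing R_NormedModule R_NormedModule => fst t) H).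
    apply filterdiff_linear, is_linear_fst.
  - intros y. simpl. reflexivity.
Qed.

Lemma is_derive_snd (q : R -> C) z (l : C) :
  is_derive q z l -> is_derive (fun t => snd (q t)) z (snd l).
Proof.
  intros H. unfold is_derive in *.
  eapply filterdiff_ext_lin.
  - apply (filterdiff_comp' q (fun t : prod_NormedModule R_AbsRing R_NormedModule R_NormedModule => snd t) z _ (fun t : prod_NormedModule R_AbsRing R_NormedModule R_NormedModule => snd t) H).
    apply filterdiff_linear, is_linear_snd.
  - intros y. simpl. reflexivity.
Qed.

Lemma deriv_cont (g dg : R -> R) x : is_derive g x (dg x) -> continuity_pt g x.
Proof.
  intros H. apply continuity_pt_filterlim. apply (ex_derive_continuous g x).
  exists (dg x). exact H.
Qed.

Lemma mvt_all (g dg : R -> R) a b : (forall x, is_derive g x (dg x)) ->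
  exists c, Rmin a b <= c <= Rmax a b /\ g b - g a = dg c * (b - a).
Proof.
  intros H. apply MVT_gen.
  - intros; apply H.
  - intros; eapply deriv_cont; apply H.
Qed.

Lemma deriv0_const (g : R -> R) : (forall x, is_derive g x 0) -> forall x y, g x = g y.
Proof.
  intros H x y. destruct (mvt_all g (fun _ => 0) y x H) as [c [_ Hc]]. lra.
Qed.

Lemma deriv_pos_incr (g dg : R -> R) a b : (forall x, is_derive g x (dg x)) ->
  (forall x, 0 < dg x) -> a < b -> g a < g b.
Proof.
  intros H Hp Hab. destruct (mvt_all g dg a b H) as [c [_ Hc]].
  specialize (Hp c). nra.
Qed.

Lemma antideriv (F : R -> R) : (forall z, continuous F z) ->
  exists Phi : R -> R, forall z, is_derive Phi z (F z).
Proof.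
  intros HF. exists (fun z => RInt F 0 z). intros z.
  apply (is_derive_RInt F (fun z => RInt F 0 z) 0 z); [|apply HF].
  apply filter_forall. intros b. apply (RInt_correct (V:=R_CompleteNormedModule)).
  apply (ex_RInt_continuous (V:=R_CompleteNormedModule)). intros; apply HF.
Qed.

Lemma shift_const (Phi F : R -> R) T : (forall z, is_derive Phi z (F z)) ->
  (forall z, F (z + T) = F z) -> forall z, Phi (z + T) - Phi z = Phi T - Phi 0.
Proof.
  intros H HF z.
  assert (D : forall x, is_derive (fun z => Phi (z + T) - Phi z) x 0).
  { intros x. auto_derive.
    - split; [eexists; apply H|split; [eexists; apply H|exact I]].
    - rewrite (is_derive_unique (fun z : R => Phi z) (x + T) _ (H (x + T))).
      rewrite (is_derive_unique (fun z : R => Phi z) x _ (H x)). rewrite HF. ring. }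
  pose proof (deriv0_const _ D z 0) as E. simpl in E. rewrite Rplus_0_l in E. exact E.
Qed.

Lemma sin_2kpi x (k : Z) : sin (x + 2 * PI * IZR k) = sin x.
Proof.
  assert (S : sin (PI * IZR k) = 0) by (apply sin_eq_0_1; exists k; ring).
  rewrite sin_plus. replace (2 * PI * IZR k) with (2 * (PI * IZR k)) by ring.
  rewrite sin_2a, cos_2a_sin, S. ring.
Qed.

Lemma cos_2kpi x (k : Z) : cos (x + 2 * PI * IZR k) = cos x.
Proof.
  assert (S : sin (PI * IZR k) = 0) by (apply sin_eq_0_1; exists k; ring).
  rewrite cos_plus. replace (2 * PI * IZR k) with (2 * (PI * IZR k)) by ring.
  rewrite sin_2a, cos_2a_sin, S. ring.
Qed.

Ltac exd := match goal with
  | |- True => exact I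
  | H : forall z, is_derive ?g z _ |- ex_derive ?g ?x => eexists; apply H
  | H : forall z, is_derive ?g z _ |- ex_derive (fun t => ?g t) ?x => eexists; apply H
  end.
Ltac rwD := repeat match goal with
  | H : forall z, is_derive ?g z _ |- context [Derive ?g ?x] =>
      rewrite (is_derive_unique g x _ (H x))
  | H : forall z, is_derive ?g z _ |- context [Derive (fun t => ?g t) ?x] =>
      rewrite (is_derive_unique (fun t : R => g t) x _ (H x))
  end.

Lemma wronsk_const c f mu q1 p1 q2 p2 :
  solQ_R c f mu q1 p1 -> solQ_R c f mu q2 p2 ->
  forall z, q1 z * p2 z - p1 z * q2 z = q1 0 * p2 0 - p1 0 * q2 0.
Proof.
  intros H1 H2.
  assert (A1 : forall z, is_derive q1 z (p1 z)) by (intro z; apply H1).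
  assert (B1 : forall z, is_derive p1 z ((mu - gam c * cos (f z)) * q1 z)) by (intro z; apply H1).
  assert (A2 : forall z, is_derive q2 z (p2 z)) by (intro z; apply H2).
  assert (B2 : forall z, is_derive p2 z ((mu - gam c * cos (f z)) * q2 z)) by (intro z; apply H2).
  intros z; apply (deriv0_const (fun z => q1 z * p2 z - p1 z * q2 z)). intros x. auto_derive.
  - repeat split; exd.
  - rwD. ring.
Qed.

Lemma sol_comb c f mu q1 p1 q2 p2 a b :
  solQ_R c f mu q1 p1 -> solQ_R c f mu q2 p2 ->
  solQ_R c f mu (fun z => a * q1 z + b * q2 z) (fun z => a * p1 z + b * p2 z).
Proof.
  intros H1 H2.
  assert (A1 : forall z, is_derive q1 z (p1 z)) by (intro z; apply H1).
  assert (B1 : forall z, is_derive p1 z ((mu - gam c * cos (f z)) * q1 z)) by (intro z; apply H1).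
  assert (A2 : forall z, is_derive q2 z (p2 z)) by (intro z; apply H2).
  assert (B2 : forall z, is_derive p2 z ((mu - gam c * cos (f z)) * q2 z)) by (intro z; apply H2).
  intros x; split; auto_derive; try (repeat split; exd); rwD; ring.
Qed.

Lemma floq_iter (q : R -> R) T r :
  (forall z, q (z + T) = r * q z) -> forall n z, q (z + INR n * T) = r ^ n * q z.
Proof.
  intros H n. induction n as [|n IH]; intros z.
  - simpl. rewrite Rmult_0_l, Rplus_0_r. ring.
  - rewrite S_INR. replace (z + (INR n + 1) * T) with ((z + INR n * T) + T) by ring.
    rewrite H, IH. simpl. ring.
Qed.

Lemma floq_iter_neg (q : R -> R) T r r' : r * r' = 1 ->
  (forall z, q (z + T) = r * q z) -> forall n z, q (z - INR n * T) = r' ^ n * q z.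
Proof.
  intros Hr H n. induction n as [|n IH]; intros z.
  - simpl. rewrite Rmult_0_l. replace (z - 0) with z by ring. ring.
  - rewrite S_INR.
    assert (E : q (z - INR n * T) = r * q (z - (INR n + 1) * T)).
    { rewrite <- H. f_equal. ring. }
    rewrite IH in E. simpl.
    replace (q (z - (INR n + 1) * T)) with (r' * (r * q (z - (INR n + 1) * T))).
    + rewrite <- E. ring.
    + replace (r' * (r * q (z - (INR n + 1) * T))) with ((r * r') * q (z - (INR n + 1) * T)) by ring.
      rewrite Hr. ring.
Qed.

Lemma pow_abs_le1 x n : Rabs x <= 1 -> Rabs (x ^ n) <= 1.
Proof.
  intros H. rewrite <- RPow_abs. induction n as [|n IH]; simpl; [lra|].
  apply Rle_trans with (1 * 1); [|lra].
  apply Rmult_le_compat; auto using Rabs_pos. apply pow_le, Rabs_pos.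
Qed.

Lemma growth_zero (K rho B : R) : Rabs rho > 1 ->
  (forall n : nat, Rabs K * Rabs (rho ^ n) <= B) -> K = 0.
Proof.
  intros Hr HB. destruct (Req_dec K 0) as [|HK]; auto.
  assert (HKp : 0 < Rabs K) by (apply Rabs_pos_lt; auto).
  destruct (Pow_x_infinity rho Hr (B / Rabs K + 1)) as [N HN].
  specialize (HN N (le_n N)). specialize (HB N).
  exfalso.
  assert (Rabs K * Rabs (rho ^ N) >= Rabs K * (B / Rabs K + 1)).
  { apply Rle_ge, Rmult_le_compat_l; lra. }
  replace (Rabs K * (B / Rabs K + 1)) with (B + Rabs K) in H by (field; lra).
  lra.
Qed.

Section Floq.
Variables (c : R) (f : R -> R) (mu T : R) (qa pa qb pb : R -> R) (ra rb : R).
Hypothesis Ha : solQ_R c f mu qa pa.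
Hypothesis Hb : solQ_R c f mu qb pb.
Hypothesis Fa : forall z, qa (z + T) = ra * qa z /\ pa (z + T) = ra * pa z.
Hypothesis Fb : forall z, qb (z + T) = rb * qb z /\ pb (z + T) = rb * pb z.
Hypothesis HW : qa 0 * pb 0 - pa 0 * qb 0 <> 0.

Lemma floq_prod : ra * rb = 1.
Proof.
  pose proof (wronsk_const c f mu qa pa qb pb Ha Hb T) as E.
  destruct (Fa 0) as [E1 E2]. destruct (Fb 0) as [E3 E4].
  rewrite Rplus_0_l in E1, E2, E3, E4. rewrite E1, E2, E3, E4 in E.
  apply (Rmult_eq_reg_r (qa 0 * pb 0 - pa 0 * qb 0)); auto.
  rewrite <- E at 2. ring.
Qed.

Lemma floq_delta : Delta_q c f T mu (ra + rb).
Proof.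
  set (W0 := qa 0 * pb 0 - pa 0 * qb 0).
  exists (fun z => (pb 0 / W0) * qa z + (- pa 0 / W0) * qb z),
         (fun z => (pb 0 / W0) * pa z + (- pa 0 / W0) * pb z),
         (fun z => (- qb 0 / W0) * qa z + (qa 0 / W0) * qb z),
         (fun z => (- qb 0 / W0) * pa z + (qa 0 / W0) * pb z).
  split; [apply sol_comb; auto|].
  split; [apply sol_comb; auto|].
  unfold W0 in *.
  split; [field; auto|]. split; [field; auto|].
  split; [field; auto|]. split; [field; auto|].
  destruct (Fa 0) as [E1 E2]. destruct (Fb 0) as [E3 E4].
  rewrite Rplus_0_l in E1, E2, E3, E4. rewrite E1, E2, E3, E4. field. auto.
Qed.

Lemma floq_bounded_zero : Rabs ra > 1 ->
  forall r r', solQ_R c f mu r r' -> (exists M, forall z, Rabs (r z) <= M) ->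
  forall z, r z = 0.
Proof.
  intros Hra r r' Hr [M HM] z.
  pose proof floq_prod as Hp.
  set (W0 := qa 0 * pb 0 - pa 0 * qb 0) in *.
  set (Ka := r 0 * pb 0 - r' 0 * qb 0).
  set (Kb := qa 0 * r' 0 - pa 0 * r 0).
  assert (Hrep : forall x, W0 * r x = Ka * qa x + Kb * qb x).
  { intros x. unfold Ka, Kb.
    rewrite <- (wronsk_const c f mu r r' qb pb Hr Hb x).
    rewrite <- (wronsk_const c f mu qa pa r r' Ha Hr x).
    unfold W0. rewrite <- (wronsk_const c f mu qa pa qb pb Ha Hb x). ring. }
  assert (Hrb : Rabs rb < 1).
  { assert (Rabs ra * Rabs rb = 1) by (rewrite <- Rabs_mult, Hp; apply Rabs_R1).
    nra. }
  assert (Fa1 : forall z, qa (z + T) = ra * qa z) by (intro; apply Fa).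
  assert (Fb1 : forall z, qb (z + T) = rb * qb z) by (intro; apply Fb).
  assert (Hp' : rb * ra = 1) by lra.
  assert (K1 : Ka * qa z = 0).
  { apply (growth_zero _ ra (Rabs W0 * M + Rabs (Kb * qb z))); auto.
    intros n. rewrite <- Rabs_mult.
    assert (E : Ka * qa z * ra ^ n = W0 * r (z + INR n * T) - Kb * rb ^ n * qb z).
    { rewrite Hrep, (floq_iter qa T ra Fa1), (floq_iter qb T rb Fb1). ring. }
    rewrite E. eapply Rle_trans; [apply Rabs_triang|].
    rewrite Rabs_Ropp, Rabs_mult.
    apply Rplus_le_compat.
    - apply Rmult_le_compat_l; [apply Rabs_pos| apply HM].
    - replace (Kb * rb ^ n * qb z) with ((Kb * qb z) * rb ^ n) by ring.
      rewrite Rabs_mult. pose proof (pow_abs_le1 rb n ltac:(lra)).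
      pose proof (Rabs_pos (Kb * qb z)). nra. }
  assert (K2 : Kb * qb z = 0).
  { apply (growth_zero _ ra (Rabs W0 * M + Rabs (Ka * qa z))); auto.
    intros n. rewrite <- Rabs_mult.
    assert (E : Kb * qb z * ra ^ n = W0 * r (z - INR n * T) - Ka * rb ^ n * qa z).
    { rewrite Hrep, (floq_iter_neg qa T ra rb Hp Fa1), (floq_iter_neg qb T rb ra Hp' Fb1). ring. }
    rewrite E. eapply Rle_trans; [apply Rabs_triang|].
    rewrite Rabs_Ropp, Rabs_mult.
    apply Rplus_le_compat.
    - apply Rmult_le_compat_l; [apply Rabs_pos| apply HM].
    - replace (Ka * rb ^ n * qa z) with ((Ka * qa z) * rb ^ n) by ring.
      rewrite Rabs_mult. pose proof (pow_abs_le1 rb n ltac:(lra)).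
      pose proof (Rabs_pos (Ka * qa z)). nra. }
  assert (W0 * r z = 0) by (rewrite Hrep; lra).
  apply (Rmult_eq_reg_l W0); auto. lra.
Qed.

End Floq.

Lemma not_sigma c f mu lam :
  (forall r r', solQ_R c f mu r r' -> (exists M, forall z, Rabs (r z) <= M) -> forall z, r z = 0) ->
  Cmult (RtoC (gam c ^ 2)) (Cmult lam lam) = RtoC mu -> ~ in_sigmaQ c f lam.
Proof.
  intros Hz Heq [q [p [Hs [[z0 Hz0] [M HM]]]]].
  rewrite Heq in Hs.
  assert (H1 : forall z, fst (q z) = 0).
  { apply (Hz _ (fun z => fst (p z))).
    - intros z. destruct (Hs z) as [A B]. split.
      + apply (is_derive_fst q z (p z) A).
      + pose proof (is_derive_fst p z _ B) as B'.
        simpl in B'. replace ((mu - gam c * cos (f z)) * fst (q z)) with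
          ((mu + - (gam c * cos (f z))) * fst (q z) - (0 + - 0) * snd (q z)) by ring.
        exact B'.
    - exists M. intros z. eapply Rle_trans; [|apply (HM z)].
      eapply Rle_trans; [apply Rmax_l|apply Rmax_Cmod]. }
  assert (H2 : forall z, snd (q z) = 0).
  { apply (Hz _ (fun z => snd (p z))).
    - intros z. destruct (Hs z) as [A B]. split.
      + apply (is_derive_snd q z (p z) A).
      + pose proof (is_derive_snd p z _ B) as B'.
        simpl in B'. replace ((mu - gam c * cos (f z)) * snd (q z)) with
          ((mu + - (gam c * cos (f z))) * snd (q z) + (0 + - 0) * fst (q z)) by ring.
        exact B'.
    - exists M. intros z. eapply Rle_trans; [|apply (HM z)].
      eapply Rle_trans; [apply Rmax_r|apply Rmax_Cmod]. }
  apply Hz0. specialize (H1 z0). specialize (H2 z0).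
  destruct (q z0) as [x y]. simpl in *. subst. reflexivity.
Qed.

Lemma Ci_sq (x : R) : Cmult (Cmult Ci (RtoC x)) (Cmult Ci (RtoC x)) = RtoC (- (x * x)).
Proof. unfold Cmult, Ci, RtoC; simpl. apply injective_projections; simpl; ring. Qed.

Lemma conclude c f T mu qa pa qb pb ra rb :
  mu < 0 -> gam c <> 0 ->
  solQ_R c f mu qa pa -> solQ_R c f mu qb pb ->
  (forall z, qa (z + T) = ra * qa z /\ pa (z + T) = ra * pa z) ->
  (forall z, qb (z + T) = rb * qb z /\ pb (z + T) = rb * pb z) ->
  qa 0 * pb 0 - pa 0 * qb 0 <> 0 -> Rabs ra <> 1 ->
  exists mu_s : R, mu_s < 0 /\
    (exists d : R, Delta_q c f T mu_s d /\ Rabs d > 2) /\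
    (exists beta_s : R, 0 < beta_s /\
       RtoC mu_s = Cmult (Cmult Ci (RtoC (gam c * beta_s)))
                         (Cmult Ci (RtoC (gam c * beta_s))) /\
       ~ in_sigmaQ c f (Cmult Ci (RtoC beta_s)) /\
       ~ in_sigmaQ c f (Cmult Ci (RtoC (- beta_s)))).
Proof.
  intros Hmu Hg Ha Hb Fa Fb HW Hra.
  pose proof (floq_prod c f mu T qa pa qb pb ra rb Ha Hb Fa Fb HW) as Hp.
  exists mu. split; auto. split.
  - exists (ra + rb). split; [apply (floq_delta c f mu T qa pa qb pb ra rb); auto|].
    assert (ra <> rb).
    { intros E. subst rb. apply Hra. assert (ra * ra = 1) by lra.
      destruct (Rle_dec 0 ra); [rewrite Rabs_right|rewrite Rabs_left]; nra. }
    assert (Hsq : (ra + rb) * (ra + rb) > 4).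
    { assert ((ra - rb) * (ra - rb) > 0).
      { assert (ra - rb <> 0) by lra. nra. }
      nra. }
    destruct (Rle_dec 0 (ra + rb)); [rewrite Rabs_right|rewrite Rabs_left]; nra.
  - set (beta := sqrt (- mu) / Rabs (gam c)).
    assert (Hag : 0 < Rabs (gam c)) by (apply Rabs_pos_lt; auto).
    assert (Hs : 0 < sqrt (- mu)) by (apply sqrt_lt_R0; lra).
    assert (Hb2 : gam c * beta * (gam c * beta) = - mu).
    { unfold beta. replace (gam c * (sqrt (- mu) / Rabs (gam c)) * (gam c * (sqrt (- mu) / Rabs (gam c))))
        with ((gam c * gam c) / (Rabs (gam c) * Rabs (gam c)) * (sqrt (- mu) * sqrt (- mu))) by (field; lra).
      rewrite sqrt_sqrt by lra. rewrite <- Rabs_mult, Rabs_right by nra. field. nra. }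
    assert (Hsig : forall lam, Cmult (Cmult Ci (RtoC (gam c * beta))) (Cmult Ci (RtoC (gam c * beta)))
         = Cmult (RtoC (gam c ^ 2)) (Cmult lam lam) ->
        ~ in_sigmaQ c f lam).
    { intros lam E. apply (not_sigma c f mu).
      - destruct (Rlt_dec 1 (Rabs ra)).
        + apply (floq_bounded_zero c f mu T qa pa qb pb ra rb); auto.
        + assert (Rabs ra * Rabs rb = 1) by (rewrite <- Rabs_mult, Hp; apply Rabs_R1).
          assert (0 <= Rabs ra) by apply Rabs_pos.
          assert (Rabs ra < 1) by lra.
          apply (floq_bounded_zero c f mu T qb pb qa pa rb ra); auto.
          * intros E'; apply HW; lra.
          * nra.
      - rewrite <- E, Ci_sq, Hb2. f_equal. ring. }
    exists beta. split; [unfold beta; apply Rdiv_lt_0_compat; auto|].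
    split; [rewrite Ci_sq, Hb2; f_equal; ring|].
    split; apply Hsig; rewrite !Ci_sq; unfold Cmult, RtoC; simpl;
      apply injective_projections; simpl; ring.
Qed.

Lemma cont_of_deriv (g : R -> R) (dg : R -> R) :
  (forall z, is_derive g z (dg z)) -> continuity g.
Proof. intros H x. eapply deriv_cont. apply H. Qed.

Lemma const_sign (h dh : R -> R) : (forall z, is_derive h z (dh z)) ->
  (forall z, h z <> 0) -> forall z, 0 < h z * h 0.
Proof.
  intros Hd Hn z.
  destruct (Rlt_dec 0 (h z * h 0)) as [|Hn']; auto. exfalso.
  destruct (IVT_gen h z 0 0 (cont_of_deriv h dh Hd)) as [x [_ Hx]].
  - assert (h z * h 0 <= 0) by lra.
    assert (h z <> 0) by apply Hn. assert (h 0 <> 0) by apply Hn.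
    unfold Rmin, Rmax; destruct (Rle_dec (h z) (h 0)); split; nra.
  - apply (Hn x Hx).
Qed.

Lemma int_cont_const (g dg : R -> R) : (forall z, is_derive g z (dg z)) ->
  (forall z, exists k : Z, g z = IZR k) -> forall z, g z = g 0.
Proof.
  intros Hd Hk z.
  destruct (Hk z) as [k1 E1]. destruct (Hk 0) as [k0 E0].
  destruct (Z.eq_dec k1 k0) as [->|Hne]; [congruence|]. exfalso.
  assert (Hv : exists v, Rmin (g z) (g 0) <= v <= Rmax (g z) (g 0) /\
                 (v = IZR k0 + /2 \/ v = IZR k0 - /2)).
  { destruct (Z_lt_le_dec k0 k1) as [Hl|Hl].
    - assert (IZR k0 + 1 <= IZR k1) by (rewrite <- plus_IZR; apply IZR_le; lia).
      exists (IZR k0 + /2). rewrite E1, E0. unfold Rmin, Rmax.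
      destruct (Rle_dec (IZR k1) (IZR k0)); split; [lra|lra|lra|left; lra].
    - assert (IZR k1 + 1 <= IZR k0) by (rewrite <- plus_IZR; apply IZR_le; lia).
      exists (IZR k0 - /2). rewrite E1, E0. unfold Rmin, Rmax.
      destruct (Rle_dec (IZR k1) (IZR k0)); split; [lra|lra|lra|right; lra]. }
  destruct Hv as [v [Hv1 Hv2]].
  destruct (IVT_gen g z 0 v (cont_of_deriv g dg Hd) Hv1) as [x [_ Hx]].
  destruct (Hk x) as [m Em]. rewrite Hx in Em.
  destruct Hv2 as [Hv2|Hv2]; subst v.
  - assert (IZR (2 * m) = IZR (2 * k0 + 1)).
    { rewrite plus_IZR, !mult_IZR. lra. }
    apply eq_IZR in H. lia.
  - assert (IZR (2 * m) = IZR (2 * k0 - 1)) by (rewrite minus_IZR, !mult_IZR; lra).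
    apply eq_IZR in H. lia.
Qed.

Section Wave.
Variables (c : R) (f : R -> R) (E T : R).
Hypothesis Htw : traveling_wave c f.
Hypothesis Hen : has_energy c f E.
Hypothesis Hper : fundamental_period f T.

Lemma gam_nz : gam c <> 0.
Proof. destruct Htw as [H _]. unfold gam. apply Rinv_neq_0_compat. lra. Qed.

Lemma Hf : forall z, is_derive f z (Derive f z).
Proof. intros z. apply Derive_correct. apply Htw. Qed.

Lemma Hy : forall z, is_derive (Derive f) z (- gam c * sin (f z)).
Proof.
  intros z. destruct Htw as [Hc [_ [H2 H3]]].
  pose proof (Derive_correct _ _ (H2 z)) as D.
  specialize (H3 z). change (Derive_n f 2 z) with (Derive (Derive f) z) in H3.
  replace (- gam c * sin (f z)) with (Derive (Derive f) z); auto.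
  assert (Hc' : c^2 - 1 <> 0) by lra.
  apply (Rmult_eq_reg_l (c^2-1)); auto. unfold gam.
  replace ((c^2-1) * (- / (c^2-1) * sin (f z))) with (- sin (f z)) by (field; auto). lra.
Qed.

Lemma Henergy : forall z, Derive f z ^ 2 = 2 * gam c * (E - 1 + cos (f z)).
Proof.
  intros z. specialize (Hen z). destruct Htw as [Hc _]. unfold gam.
  rewrite <- Hen. field. lra.
Qed.

Lemma per_k : exists k : Z, forall z, f (z + T) = f z + 2 * PI * IZR k.
Proof.
  destruct Hper as [[HT Hk] _].
  assert (Hpi : 0 < PI) by apply PI_RGT_0.
  pose (g := fun z => (f (z + T) - f z) / (2 * PI)).
  assert (Hd : forall z, is_derive g z ((Derive f (z + T) - Derive f z) / (2 * PI))).
  { intros z. unfold g. auto_derive.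
    - split; [|split; [|auto]]; eexists; apply Hf.
    - rewrite (is_derive_unique (fun x : R => f x) (z + T) _ (Hf (z + T))).
      rewrite (is_derive_unique (fun x : R => f x) z _ (Hf z)). field. lra. }
  assert (Hi : forall z, exists k : Z, g z = IZR k).
  { intros z. destruct (Hk z) as [k Ek]. exists k. unfold g. rewrite Ek. field. lra. }
  destruct (Hi 0) as [k0 E0]. exists k0. intros z.
  pose proof (int_cont_const g _ Hd Hi z) as Ez. rewrite E0 in Ez. unfold g in Ez.
  apply (Rmult_eq_compat_r (2 * PI)) in Ez.
  field_simplify in Ez; lra.
Qed.

Lemma y_per : forall z, Derive f (z + T) = Derive f z.
Proof.
  destruct per_k as [k Hk]. intros z.
  assert (D1 : is_derive (fun x => f (x + T)) z (Derive f (z + T))).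
  { auto_derive.
    - exists (Derive f (z + T)); apply Hf.
    - rewrite (is_derive_unique (fun x : R => f x) (z + T) _ (Hf (z + T))). ring. }
  assert (D2 : is_derive (fun x => f x + 2 * PI * IZR k) z (Derive f z)).
  { auto_derive.
    - exists (Derive f z); apply Hf.
    - rewrite (is_derive_unique (fun x : R => f x) z _ (Hf z)). ring. }
  apply (is_derive_ext _ (fun x => f x + 2 * PI * IZR k)) in D1; [|intros; apply Hk].
  rewrite <- (is_derive_unique _ _ _ D1). apply (is_derive_unique _ _ _ D2).
Qed.

End Wave.

Ltac toR := match goal with |- ?a = ?b => change (@eq R a b) end.

Section Lib.
Variables (c : R) (f : R -> R) (E T : R).
Hypothesis Htw : traveling_wave c f.
Hypothesis Hen : has_energy c f E.
Variables (A cc t : R) (Phi : R -> R).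
Hypothesis Hcc : cc <> 0.
Hypothesis Hrel : cc ^ 2 * (1 - A ^ 2) = 2 * gam c * ((E - 1) - A).
Hypothesis HD2 : forall z, 0 < ((E - 1) - A) * cos (f z) + 1 - A * (E - 1).
Hypothesis HPhi : forall z, is_derive Phi z
  (Derive f z ^ 2 / (((E - 1) - A) * cos (f z) + 1 - A * (E - 1))
   + t * (cos (f z) * Derive f z ^ 2 - gam c * sin (f z) ^ 2)).

Definition lD2 z := ((E - 1) - A) * cos (f z) + 1 - A * (E - 1).
Definition lchi z := - ((E - 1) - A) / (2 * cc) * (Phi z - t * sin (f z) * Derive f z)
                     - / 2 * ln (lD2 z).
Definition lXc z := Derive f z * (cc * sin (f z) - Derive f z) * ((E - 1) - A) / (2 * cc * lD2 z).
Definition lq z := (Derive f z + cc * sin (f z)) * exp (lchi z).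
Definition lp z := (- gam c * sin (f z) + cc * cos (f z) * Derive f z
                    + (Derive f z + cc * sin (f z)) * lXc z) * exp (lchi z).

Ltac side0 := match goal with
 | |- True => exact I
 | |- _ /\ _ => split
 | |- ex_derive (fun t => Derive f t) ?z => exists (- gam c * sin (f z)); exact (Hy c f Htw z)
 | |- ex_derive (fun t => f t) ?z => exists (Derive f z); exact (Hf c f Htw z)
 | |- ex_derive (fun t => Phi t) ?z => eexists; exact (HPhi z)
 | |- 0 < _ => apply HD2
 | |- _ <> _ => repeat apply Rmult_integral_contrapositive_currified; let HH := fresh in intro HH; first [lra | apply Hcc; lra]
 end.

Lemma lchi_deriv : forall z, is_derive lchi z (lXc z).
Proof.
  pose proof (Hf c f Htw) as Hf'. pose proof (Hy c f Htw) as Hy'.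
  intros x. pose proof (HD2 x) as HDx. unfold lD2 in HDx. unfold lchi, lXc, lD2. auto_derive.
  - repeat side0.
  - rwD. toR. pose proof (HD2 x). field. split; [lra|auto].
Qed.

Ltac side := match goal with
 | |- True => exact I
 | |- _ /\ _ => split
 | |- ex_derive (fun t => Derive f t) ?z => exists (- gam c * sin (f z)); exact (Hy c f Htw z)
 | |- ex_derive (fun t => f t) ?z => exists (Derive f z); exact (Hf c f Htw z)
 | |- ex_derive (fun t => Phi t) ?z => eexists; exact (HPhi z)
 | |- ex_derive (fun t => lchi t) ?z => eexists; exact (lchi_deriv z)
 | |- 0 < _ => apply HD2
 | |- _ <> _ => repeat apply Rmult_integral_contrapositive_currified; let HH := fresh in intro HH; first [lra | apply Hcc; lra]
 end.

Lemma lib_sol : solQ_R c f (gam c * (A - (E - 1)) / 2) lq lp.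
Proof.
  pose proof (Hf c f Htw) as Hf'. pose proof (Hy c f Htw) as Hy'.
  pose proof lchi_deriv as Hchi.
  intros x. pose proof (HD2 x) as HDx0. unfold lD2 in HDx0. split.
  - unfold lq, lp. auto_derive.
    + repeat side.
    + rwD. toR. unfold lXc, lD2. pose proof (HD2 x). field. split; [lra|auto].
  - unfold lp, lq, lXc, lD2. auto_derive.
    + repeat side.
    + rwD. toR. unfold lXc, lD2 in *.
      pose proof (Henergy c f E Htw Hen x) as HE.
      pose proof (sin2_cos2 (f x)) as HSC. unfold Rsqr in HSC.
      pose proof (HD2 x) as HDx.
      set (s := sin (f x)) in *.
      set (u := cos (f x)) in *.
      set (y := Derive f x) in *.
      set (X := exp (lchi x)).
      set (g := gam c) in *.
      set (e := E - 1) in *.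
      clearbody s u y X g e.
      assert (hr1 : (s^2 + u^2 - 1) = 0) by (simpl; lra).
      assert (hr2 : (y^2 - 2*g*(e + u)) = 0) by (rewrite HE; ring).
      assert (hr3 : (cc^2*(1 - A^2) - 2*g*(e - A)) = 0) by (rewrite Hrel; ring).
      assert (HDx' : (e - A)*u + 1 - A*e <> 0) by lra.
      match goal with |- ?a = ?b =>
        assert (Hc : a - b = (((12*s*y^2*e^2*cc^3*X - 24*s*y^2*e*cc^3*A*X + 12*s*y^2*cc^3*A^2*X - 8*s*e^2*u*cc^3*X*g + 8*s*e^2*cc^3*A*X*g + 16*s*e*u*cc^3*A*X*g - 8*s*e*cc^3*A^2*X*g - 8*s*e*cc^3*X*g - 8*s*u*cc^3*A^2*X*g + 8*s*cc^3*A*X*g - 4*y^3*e^2*cc^2*X + 8*y^3*e*cc^2*A*X - 4*y^3*cc^2*A^2*X - 8*y*e^2*u*cc^2*X*g + 8*y*e^2*cc^2*A*X*g + 16*y*e*u*cc^2*A*X*g - 8*y*e*cc^2*A^2*X*g - 8*y*e*cc^2*X*g - 8*y*u*cc^2*A^2*X*g + 8*y*cc^2*A*X*g)) * (s^2 + u^2 - 1) + ((- 12*s*y^2*e^2*cc*X + 24*s*y^2*e*cc*A*X - 12*s*y^2*cc*A^2*X - 24*s*e^3*cc*X*g - 4*s*e^2*u^2*cc^3*X + 8*s*e^2*u*cc^3*A*X + 8*s*e^2*u*cc*X*g - 16*s*e^2*cc^3*A^2*X + 12*s*e^2*cc^3*X + 16*s*e^2*cc*A*X*g + 8*s*e*u^2*cc^3*A*X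 - 8*s*e*u*cc^3*A^2*X - 8*s*e*u*cc^3*X - 16*s*e*u*cc*A*X*g + 8*s*e*cc^3*A*X + 8*s*e*cc*A^2*X*g + 32*s*e*cc*X*g - 4*s*u^2*cc^3*A^2*X + 8*s*u*cc^3*A*X + 8*s*u*cc*A^2*X*g + 12*s*cc^3*A^2*X - 16*s*cc^3*X - 32*s*cc*A*X*g + 4*y^3*e^2*X - 8*y^3*e*A*X + 4*y^3*A^2*X + 8*y*e^3*X*g - 4*y*e^2*u^2*cc^2*X + 8*y*e^2*u*cc^2*A*X + 8*y*e^2*u*X*g - 4*y*e^2*cc^2*X - 16*y*e^2*A*X*g + 8*y*e*u^2*cc^2*A*X - 8*y*e*u*cc^2*A^2*X - 8*y*e*u*cc^2*X - 16*y*e*u*A*X*g + 8*y*e*cc^2*A*X + 8*y*e*A^2*X*g - 4*y*u^2*cc^2*A^2*X + 8*y*u*cc^2*A*X + 8*y*u*A^2*X*g - 4*y*cc^2*A^2*X)) * (y^2 - 2*g*(e + u)) + ((24*s*e^3*cc*X*g + 16*s*e^2*u*cc*X*g + 8*s*e^2*cc*A*X*g - 8*s*e*u^2*cc*X*g + 16*s*e*u*cc*A*X*g - 32*s*e*cc*X*g + 8*s*u^2*cc*A*X*g - 32*s*u*cc*X*g - 8*y*e^3*X*g - 16*y*e^2*u*X*g + 8*y*e^2*A*X*g - 8*y*e*u^2*X*g + 16*y*e*u*A*X*g + 8*y*u^2*A*X*g)) * (cc^2*(1 - A^2) - 2*g*(e - A))) / ((16) * (cc^2) * (((e - A)*u +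 1 - A*e)^2))) by (field; repeat split; auto) end.
      assert (Hz : (((12*s*y^2*e^2*cc^3*X - 24*s*y^2*e*cc^3*A*X + 12*s*y^2*cc^3*A^2*X - 8*s*e^2*u*cc^3*X*g + 8*s*e^2*cc^3*A*X*g + 16*s*e*u*cc^3*A*X*g - 8*s*e*cc^3*A^2*X*g - 8*s*e*cc^3*X*g - 8*s*u*cc^3*A^2*X*g + 8*s*cc^3*A*X*g - 4*y^3*e^2*cc^2*X + 8*y^3*e*cc^2*A*X - 4*y^3*cc^2*A^2*X - 8*y*e^2*u*cc^2*X*g + 8*y*e^2*cc^2*A*X*g + 16*y*e*u*cc^2*A*X*g - 8*y*e*cc^2*A^2*X*g - 8*y*e*cc^2*X*g - 8*y*u*cc^2*A^2*X*g + 8*y*cc^2*A*X*g)) * (s^2 + u^2 - 1) + ((- 12*s*y^2*e^2*cc*X + 24*s*y^2*e*cc*A*X - 12*s*y^2*cc*A^2*X - 24*s*e^3*cc*X*g - 4*s*e^2*u^2*cc^3*X + 8*s*e^2*u*cc^3*A*X + 8*s*e^2*u*cc*X*g - 16*s*e^2*cc^3*A^2*X + 12*s*e^2*cc^3*X + 16*s*e^2*cc*A*X*g + 8*s*e*u^2*cc^3*A*X - 8*s*e*u*cc^3*A^2*X - 8*s*e*u*cc^3*X - 16*s*e*u*cc*A*X*g + 8*s*e*cc^3*A*X + 8*s*e*cc*A^2*X*g + 32*s*e*cc*X*g - 4*s*u^2*cc^3*A^2*X + 8*s*u*cc^3*A*X + 8*s*u*cc*A^2*X*g + 12*s*cc^3*A^2*X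 - 16*s*cc^3*X - 32*s*cc*A*X*g + 4*y^3*e^2*X - 8*y^3*e*A*X + 4*y^3*A^2*X + 8*y*e^3*X*g - 4*y*e^2*u^2*cc^2*X + 8*y*e^2*u*cc^2*A*X + 8*y*e^2*u*X*g - 4*y*e^2*cc^2*X - 16*y*e^2*A*X*g + 8*y*e*u^2*cc^2*A*X - 8*y*e*u*cc^2*A^2*X - 8*y*e*u*cc^2*X - 16*y*e*u*A*X*g + 8*y*e*cc^2*A*X + 8*y*e*A^2*X*g - 4*y*u^2*cc^2*A^2*X + 8*y*u*cc^2*A*X + 8*y*u*A^2*X*g - 4*y*cc^2*A^2*X)) * (y^2 - 2*g*(e + u)) + ((24*s*e^3*cc*X*g + 16*s*e^2*u*cc*X*g + 8*s*e^2*cc*A*X*g - 8*s*e*u^2*cc*X*g + 16*s*e*u*cc*A*X*g - 32*s*e*cc*X*g + 8*s*u^2*cc*A*X*g - 32*s*u*cc*X*g - 8*y*e^3*X*g - 16*y*e^2*u*X*g + 8*y*e^2*A*X*g - 8*y*e*u^2*X*g + 16*y*e*u*A*X*g + 8*y*u^2*A*X*g)) * (cc^2*(1 - A^2) - 2*g*(e - A))) / ((16) * (cc^2) * (((e - A)*u + 1 - A*e)^2)) = 0).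
      { rewrite hr1, hr2, hr3. field. repeat split; auto. }
      lra.
Qed.

Lemma lib_floq (Hper : fundamental_period f T) :
  forall z, lq (z + T) = exp (- ((E - 1) - A) / (2 * cc) * (Phi T - Phi 0)) * lq z /\
            lp (z + T) = exp (- ((E - 1) - A) / (2 * cc) * (Phi T - Phi 0)) * lp z.
Proof.
  destruct (per_k c f T Htw Hper) as [k Hk].
  assert (Hs : forall z, sin (f (z + T)) = sin (f z)) by (intro z; rewrite Hk; apply sin_2kpi).
  assert (Hc : forall z, cos (f (z + T)) = cos (f z)) by (intro z; rewrite Hk; apply cos_2kpi).
  pose proof (y_per c f T Htw Hper) as Hyp.
  assert (HP : forall z, Phi (z + T) - Phi z = Phi T - Phi 0).
  { apply (shift_const Phi _ T HPhi). intros z. rewrite Hs, Hc, Hyp. reflexivity. }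
  assert (Hch : forall z, lchi (z + T) = - ((E - 1) - A) / (2 * cc) * (Phi T - Phi 0) + lchi z).
  { intros z. unfold lchi, lD2. rewrite Hs, Hc, Hyp, <- (HP z). ring. }
  intros z. unfold lq, lp, lXc, lD2. rewrite Hch, exp_plus, Hs, Hc, Hyp. split; ring.
Qed.
End Lib.

Lemma lib_W c f E A cc t Phi :
  traveling_wave c f -> has_energy c f E -> cc <> 0 ->
  cc ^ 2 * (1 - A ^ 2) = 2 * gam c * ((E - 1) - A) ->
  (forall z, 0 < ((E - 1) - A) * cos (f z) + 1 - A * (E - 1)) ->
  lq f E A cc t Phi 0 * lp c f E A (- cc) t Phi 0 - lp c f E A cc t Phi 0 * lq f E A (- cc) t Phi 0 <> 0.
Proof.
  intros Htw Hen Hcc Hrel HD2.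
  pose proof (Henergy c f E Htw Hen 0) as HE.
  pose proof (sin2_cos2 (f 0)) as HSC. unfold Rsqr in HSC.
  pose proof (HD2 0) as HDx.
  pose proof (gam_nz c f Htw) as Hg.
  pose proof (exp_pos (lchi f E A cc t Phi 0)) as X1p.
  pose proof (exp_pos (lchi f E A (- cc) t Phi 0)) as X2p.
  unfold lq, lp, lXc, lD2.
  set (X1 := exp (lchi f E A cc t Phi 0)) in *.
  set (X2 := exp (lchi f E A (- cc) t Phi 0)) in *.
  set (s := sin (f 0)) in *.
  set (u := cos (f 0)) in *.
  set (y := Derive f 0) in *.
  set (g := gam c) in *.
  set (e := E - 1) in *.
  clearbody s u y X1 X2 g e.
  assert (hr1 : (s^2 + u^2 - 1) = 0) by (simpl; lra).
  assert (hr2 : (y^2 - 2*g*(e + u)) = 0) by (rewrite HE; ring).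
  assert (hr3 : (cc^2*(1 - A^2) - 2*g*(e - A)) = 0) by (rewrite Hrel; ring).
  assert (HDx' : (e - A)*u + 1 - A*e <> 0) by lra.
  pose (CW := (((4*y^2*e*cc^2 - 4*y^2*cc^2*A + 8*e*u*cc^2*g - 8*e*cc^2*A*g - 8*u*cc^2*A*g + 8*cc^2*g)) * (s^2 + u^2 - 1) + ((- 4*y^2*e + 4*y^2*A - 8*e^2*g + 4*e*u^2*cc^2 - 8*e*u*cc^2*A - 8*e*u*g + 4*e*cc^2 + 8*e*A*g - 4*u^2*cc^2*A + 8*u*cc^2 + 8*u*A*g - 4*cc^2*A)) * (y^2 - 2*g*(e + u)) + ((8*e^2*g + 16*e*u*g + 8*u^2*g)) * (cc^2*(1 - A^2) - 2*g*(e - A))) / ((- 4) * (cc^1) * (((e - A)*u + 1 - A*e)^1))).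
  assert (Hz : CW = 0).
  { unfold CW. rewrite hr1, hr2, hr3. field. repeat split; auto. }
  match goal with |- ?a <> 0 =>
    assert (Ha : a = X1 * X2 * (- 2 * cc * g * ((e - A)*u + 1 - A*e)) + X1 * X2 * CW)
      by (unfold CW; field; repeat split; auto) end.
  rewrite Hz, Rmult_0_r, Rplus_0_r in Ha.
  rewrite Ha. intro HH.
  assert (X1 * X2 * (- 2 * cc * g * ((e - A)*u + 1 - A*e)) = 0) by lra.
  apply Rmult_integral in H. destruct H as [H|H].
  - apply Rmult_integral in H; destruct H; lra.
  - apply Rmult_integral in H; destruct H as [H|H]; [|lra].
    apply Rmult_integral in H; destruct H as [H|H]; [|auto].
    apply Rmult_integral in H; destruct H as [H|H]; [lra|auto].
Qed.


Lemma half_cos x : cos x = - 2 * cos (x / 2 - PI / 4) * sin (x / 2 - PI / 4).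
Proof.
  replace x with (2 * (x / 2 - PI / 4) + PI / 2) at 1 by field.
  rewrite cos_plus, cos_PI2, sin_PI2, sin_2a. ring.
Qed.

Lemma half_sin x : sin x = cos (x / 2 - PI / 4) ^ 2 - sin (x / 2 - PI / 4) ^ 2.
Proof.
  replace x with (2 * (x / 2 - PI / 4) + PI / 2) at 1 by field.
  rewrite sin_plus, cos_PI2, sin_PI2, cos_2a. ring.
Qed.


Section Rot.
Variables (c : R) (f : R -> R) (E T : R).
Hypothesis Htw : traveling_wave c f.
Hypothesis Hen : has_energy c f E.
Variables (kap : R) (h : R -> R).
Hypothesis Hkap : kap ^ 2 = gam c * (E - 1) / 2.
Hypothesis Hden : forall z, kap + Derive f z / 2 <> 0.
Hypothesis Hh : forall z, is_derive h z (- (gam c / 2) / (kap + Derive f z / 2)).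

Definition rq z := cos (f z / 2 - PI / 4) * exp (h z).
Definition rp z := (- / 2 * sin (f z / 2 - PI / 4) * Derive f z
                    + cos (f z / 2 - PI / 4) * (- (gam c / 2) / (kap + Derive f z / 2))) * exp (h z).

Ltac side := match goal with
 | |- True => exact I
 | |- _ /\ _ => split
 | |- ex_derive (fun t => Derive f t) ?z => exists (- gam c * sin (f z)); exact (Hy c f Htw z)
 | |- ex_derive (fun t => f t) ?z => exists (Derive f z); exact (Hf c f Htw z)
 | |- ex_derive (fun t => h t) ?z => eexists; exact (Hh z)
 | |- kap + Derive f ?z * / 2 <> _ => let HH := fresh in intro HH; apply (Hden z); lra
 end.

Lemma rot_sol : solQ_R c f (- gam c * (E - 1) / 2) rq rp.
Proof.
  pose proof (Hf c f Htw) as Hf'. pose proof (Hy c f Htw) as Hy'.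
  intros x. split.
  - unfold rq, rp. auto_derive.
    + repeat split; try exact I; try (eexists; first [apply Hf'|apply Hh|apply Hy']); try apply Hden.
    + rwD. toR. unfold Rdiv, Rminus. field. intro HH; apply (Hden x); lra.
  - unfold rp, rq. auto_derive.
    + repeat side.
    + rwD. toR.
      rewrite (half_cos (f x)), (half_sin (f x)).
      pose proof (Henergy c f E Htw Hen x) as HE.
      rewrite (half_cos (f x)) in HE.
      pose proof (sin2_cos2 (f x / 2 - PI / 4)) as HSC. unfold Rsqr in HSC.
      assert (HD : kap + Derive f x / 2 <> 0) by apply Hden.
      unfold Rdiv, Rminus in *.
      set (K := cos (f x * / 2 + - (PI * / 4))) in *.
      set (M := sin (f x * / 2 + - (PI * / 4))) in *.
      set (Y := Derive f x) in *.
      set (X := exp (h x)).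
      set (g := gam c) in *.
      clearbody K M Y X g.
      fold (E - 1) in *. fold (Y / 2) in *. fold (g / 2) in *.
      assert (hr1 : K^2 + M^2 - 1 = 0) by (simpl; lra).
      assert (hr2 : Y^2 - 2*g*((E - 1) - 2*K*M) = 0) by (rewrite HE; ring).
      assert (hr3 : kap^2 - g*(E - 1)/2 = 0) by (rewrite Hkap; field).
      assert (HD4 : (1/16)*Y^4 + (1/2)*Y^3*kap + (3/2)*Y^2*kap^2 + 2*Y*kap^3 + kap^4 <> 0).
      { replace ((1/16)*Y^4 + (1/2)*Y^3*kap + (3/2)*Y^2*kap^2 + 2*Y*kap^3 + kap^4)
          with ((kap + Y/2)^4) by field. apply pow_nonzero. auto. }
      match goal with |- ?a = ?b =>
        assert (Hc : a - b = (((- (1/32)*Y^4*M*X*g - (1/4)*Y^3*kap*M*X*g - (1/16)*Y^2*K*X*g^2 - (3/4)*Y^2*kap^2*M*X*g - (1/4)*Y*K*kap*X*g^2 - Y*kap^3*M*X*g - (1/4)*K*kap^2*X*g^2 - (1/2)*kap^4*M*X*g)) * (K^2 + M^2 - 1) + ((- (1/64)*Y^4*K*X - (1/8)*Y^3*K*kap*X - (3/8)*Y^2*K*kap^2*X + (1/32)*Y^2*M*X*g - (1/2)*Y*K*kap^3*X + (1/8)*Y*kap*M*X*g - (1/4)*K*kap^4*X + (1/16)*M*X*g^2*(E - 1))) * (Y^2 - 2*g*((E - 1) - 2*K*M)) + ((- (1/2)*Y*kap*M*X*g + (1/2)*K*M^2*X*g^2 - (1/2)*kap^2*M*X*g - (1/4)*M*X*g^2*(E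 - 1))) * (kap^2 - g*(E - 1)/2)) / (((1/16)*Y^4 + (1/2)*Y^3*kap + (3/2)*Y^2*kap^2 + 2*Y*kap^3 + kap^4))) by (field; repeat split; intro HH; first [apply HD4; lra | apply HD; lra | lra]) end.
      assert (Hz : (((- (1/32)*Y^4*M*X*g - (1/4)*Y^3*kap*M*X*g - (1/16)*Y^2*K*X*g^2 - (3/4)*Y^2*kap^2*M*X*g - (1/4)*Y*K*kap*X*g^2 - Y*kap^3*M*X*g - (1/4)*K*kap^2*X*g^2 - (1/2)*kap^4*M*X*g)) * (K^2 + M^2 - 1) + ((- (1/64)*Y^4*K*X - (1/8)*Y^3*K*kap*X - (3/8)*Y^2*K*kap^2*X + (1/32)*Y^2*M*X*g - (1/2)*Y*K*kap^3*X + (1/8)*Y*kap*M*X*g - (1/4)*K*kap^4*X + (1/16)*M*X*g^2*(E - 1))) * (Y^2 - 2*g*((E - 1) - 2*K*M)) + ((- (1/2)*Y*kap*M*X*g + (1/2)*K*M^2*X*g^2 - (1/2)*kap^2*M*X*g - (1/4)*M*X*g^2*(E - 1))) * (kap^2 - g*(E - 1)/2)) / (((1/16)*Y^4 + (1/2)*Y^3*kap + (3/2)*Y^2*kap^2 + 2*Y*kap^3 + kap^4)) = 0).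
      { rewrite hr1, hr2, hr3. field. intro HH; apply HD4; lra. }
      lra.
Qed.
Definition rq2 z := sin (f z / 2 - PI / 4) * exp (- h z).
Definition rp2 z := (/ 2 * cos (f z / 2 - PI / 4) * Derive f z
                    - sin (f z / 2 - PI / 4) * (- (gam c / 2) / (kap + Derive f z / 2))) * exp (- h z).

Lemma rot_sol2 : solQ_R c f (- gam c * (E - 1) / 2) rq2 rp2.
Proof.
  pose proof (Hf c f Htw) as Hf'. pose proof (Hy c f Htw) as Hy'.
  intros x. split.
  - unfold rq2, rp2. auto_derive.
    + repeat split; try exact I; try (eexists; first [apply Hf'|apply Hh|apply Hy']); try apply Hden.
    + rwD. toR. unfold Rdiv, Rminus. field. intro HH; apply (Hden x); lra.
  - unfold rp2, rq2. auto_derive.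
    + repeat side.
    + rwD. toR.
      rewrite (half_cos (f x)), (half_sin (f x)).
      pose proof (Henergy c f E Htw Hen x) as HE.
      rewrite (half_cos (f x)) in HE.
      pose proof (sin2_cos2 (f x / 2 - PI / 4)) as HSC. unfold Rsqr in HSC.
      assert (HD : kap + Derive f x / 2 <> 0) by apply Hden.
      unfold Rdiv, Rminus in *.
      set (K := cos (f x * / 2 + - (PI * / 4))) in *.
      set (M := sin (f x * / 2 + - (PI * / 4))) in *.
      set (Y := Derive f x) in *.
      set (X := exp (- h x)).
      set (g := gam c) in *.
      clearbody K M Y X g.
      fold (E - 1) in *. fold (Y / 2) in *. fold (g / 2) in *.
      assert (hr1 : K^2 + M^2 - 1 = 0) by (simpl; lra).
      assert (hr2 : Y^2 - 2*g*((E - 1) - 2*K*M) = 0) by (rewrite HE; ring).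
      assert (hr3 : kap^2 - g*(E - 1)/2 = 0) by (rewrite Hkap; field).
      assert (HD4 : (1/16)*Y^4 + (1/2)*Y^3*kap + (3/2)*Y^2*kap^2 + 2*Y*kap^3 + kap^4 <> 0).
      { replace ((1/16)*Y^4 + (1/2)*Y^3*kap + (3/2)*Y^2*kap^2 + 2*Y*kap^3 + kap^4)
          with ((kap + Y/2)^4) by field. apply pow_nonzero. auto. }
      match goal with |- ?a = ?b =>
        assert (Hc : a - b = (((- (1/32)*Y^4*K*X*g - (1/4)*Y^3*K*kap*X*g - (3/4)*Y^2*K*kap^2*X*g - (1/16)*Y^2*M*X*g^2 - Y*K*kap^3*X*g - (1/4)*Y*kap*M*X*g^2 - (1/2)*K*kap^4*X*g + (1/4)*kap^2*M*X*g^2 - (1/4)*M*X*g^3*(E - 1))) * (K^2 + M^2 - 1) + ((- (1/64)*Y^4*M*X - (1/8)*Y^3*kap*M*X + (1/32)*Y^2*K*X*g - (3/8)*Y^2*kap^2*M*X + (1/8)*Y*K*kap*X*g - (1/2)*Y*kap^3*M*X + (1/16)*K*X*g^2*(E - 1) - (1/4)*kap^4*M*X)) * (Y^2 - 2*g*((E - 1) - 2*K*M)) + ((- (1/2)*Y*K*kap*X*g - (1/2)*K*kap^2*X*g - (1/4)*K*X*g^2*(E - 1) - (1/2)*M^3*X*g^2 + (1/2)*M*X*g^2)) * (kap^2 - g*(E - 1)/2)) / (((1/16)*Y^4 + (1/2)*Y^3*kap + (3/2)*Y^2*kap^2 + 2*Y*kap^3 + kap^4))) by (field; repeat split; intro HH;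 first [apply HD4; lra | apply HD; lra | lra]) end.
      assert (Hz : (((- (1/32)*Y^4*K*X*g - (1/4)*Y^3*K*kap*X*g - (3/4)*Y^2*K*kap^2*X*g - (1/16)*Y^2*M*X*g^2 - Y*K*kap^3*X*g - (1/4)*Y*kap*M*X*g^2 - (1/2)*K*kap^4*X*g + (1/4)*kap^2*M*X*g^2 - (1/4)*M*X*g^3*(E - 1))) * (K^2 + M^2 - 1) + ((- (1/64)*Y^4*M*X - (1/8)*Y^3*kap*M*X + (1/32)*Y^2*K*X*g - (3/8)*Y^2*kap^2*M*X + (1/8)*Y*K*kap*X*g - (1/2)*Y*kap^3*M*X + (1/16)*K*X*g^2*(E - 1) - (1/4)*kap^4*M*X)) * (Y^2 - 2*g*((E - 1) - 2*K*M)) + ((- (1/2)*Y*K*kap*X*g - (1/2)*K*kap^2*X*g - (1/4)*K*X*g^2*(E - 1) - (1/2)*M^3*X*g^2 + (1/2)*M*X*g^2)) * (kap^2 - g*(E - 1)/2)) / (((1/16)*Y^4 + (1/2)*Y^3*kap + (3/2)*Y^2*kap^2 + 2*Y*kap^3 + kap^4)) = 0).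
      { rewrite hr1, hr2, hr3. field. intro HH; apply HD4; lra. }
      lra.
Qed.
End Rot.


Lemma cos_kpi_shift x (k : Z) : cos (x + PI * IZR k) = cos (PI * IZR k) * cos x.
Proof.
  assert (S : sin (PI * IZR k) = 0) by (apply sin_eq_0_1; exists k; ring).
  rewrite cos_plus, S. ring.
Qed.
Lemma sin_kpi_shift x (k : Z) : sin (x + PI * IZR k) = cos (PI * IZR k) * sin x.
Proof.
  assert (S : sin (PI * IZR k) = 0) by (apply sin_eq_0_1; exists k; ring).
  rewrite sin_plus, S. ring.
Qed.

Lemma rot_floq c f T kap h :
  traveling_wave c f -> fundamental_period f T ->
  (forall z, is_derive h z (- (gam c / 2) / (kap + Derive f z / 2))) ->
  exists C, C ^ 2 = 1 /\ forall z,
    rq f h (z + T) = C * exp (h T - h 0) * rq f h z /\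
    rp c f kap h (z + T) = C * exp (h T - h 0) * rp c f kap h z /\
    rq2 f h (z + T) = C * exp (- (h T - h 0)) * rq2 f h z /\
    rp2 c f kap h (z + T) = C * exp (- (h T - h 0)) * rp2 c f kap h z.
Proof.
  intros Htw Hper Hh.
  destruct (per_k c f T Htw Hper) as [k Hk].
  pose proof (y_per c f T Htw Hper) as Hyp.
  exists (cos (PI * IZR k)). split.
  { assert (S : sin (PI * IZR k) = 0) by (apply sin_eq_0_1; exists k; ring).
    pose proof (sin2_cos2 (PI * IZR k)) as H. unfold Rsqr in H. rewrite S in H. simpl. lra. }
  assert (Hw : forall z, f (z + T) / 2 - PI / 4 = (f z / 2 - PI / 4) + PI * IZR k).
  { intros z. rewrite Hk. field. }
  assert (HP : forall z, h (z + T) = h z + (h T - h 0)).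
  { intros z. pose proof (shift_const h _ T Hh) as S.
    assert (HF : forall z, - (gam c / 2) / (kap + Derive f (z + T) / 2) = - (gam c / 2) / (kap + Derive f z / 2))
      by (intro; rewrite Hyp; reflexivity).
    specialize (S HF z). lra. }
  intros z. unfold rq, rp, rq2, rp2.
  rewrite !Hw, !cos_kpi_shift, !sin_kpi_shift, !HP, !Hyp.
  replace (- (h z + (h T - h 0))) with (- (h T - h 0) + - h z) by ring.
  rewrite !exp_plus. repeat split; ring.
Qed.

Lemma rot_W c f E kap h :
  traveling_wave c f -> has_energy c f E ->
  kap ^ 2 = gam c * (E - 1) / 2 -> kap + Derive f 0 / 2 <> 0 ->
  rq f h 0 * rp2 c f kap h 0 - rp c f kap h 0 * rq2 f h 0 = kap.
Proof.
  intros Htw Hen Hkap HD.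
  pose proof (Henergy c f E Htw Hen 0) as HE.
  rewrite (half_cos (f 0)) in HE.
  pose proof (sin2_cos2 (f 0 / 2 - PI / 4)) as HSC. unfold Rsqr in HSC.
  assert (HX : exp (h 0) * exp (- h 0) = 1) by (rewrite <- exp_plus; replace (h 0 + - h 0) with 0 by ring; apply exp_0).
  unfold rq, rp, rq2, rp2.
  set (K := cos (f 0 / 2 - PI / 4)) in *.
  set (M := sin (f 0 / 2 - PI / 4)) in *.
  set (Y := Derive f 0) in *.
  set (X1 := exp (h 0)) in *.
  set (X2 := exp (- h 0)) in *.
  set (g := gam c) in *.
  clearbody K M Y X1 X2 g.
  assert (hr1 : K^2 + M^2 - 1 = 0) by (simpl; lra).
  assert (hr2 : Y^2 - 2*g*((E - 1) - 2*K*M) = 0) by (rewrite HE; ring).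
  assert (hr3 : kap^2 - g*(E - 1)/2 = 0) by (rewrite Hkap; field).
  assert (HD2 : ((1/4)*Y^2 + Y*kap + kap^2) <> 0).
  { replace ((1/4)*Y^2 + Y*kap + kap^2) with ((kap + Y/2)^2) by field. apply pow_nonzero. auto. }
  pose (CW := ((((1/8)*Y^3 + (1/2)*Y^2*kap + (1/2)*Y*kap^2)) * (K^2 + M^2 - 1) + (((1/8)*Y + (1/4)*kap)) * (Y^2 - 2*g*((E - 1) - 2*K*M)) + ((- (1/2)*Y - kap)) * (kap^2 - g*(E - 1)/2)) / (((1/4)*Y^2 + Y*kap + kap^2))).
  assert (Hz : CW = 0).
  { unfold CW. rewrite hr1, hr2, hr3. field. intro HH; apply HD2; lra. }
  match goal with |- ?a = _ =>
    assert (Ha : a = X1 * X2 * kap + X1 * X2 * CW)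
      by (unfold CW; field; repeat split; intro HH; first [apply HD2; lra | apply HD; lra]) end.
  rewrite Hz, Rmult_0_r, Rplus_0_r, HX in Ha. lra.
Qed.

Lemma exp_ne1 x : x <> 0 -> Rabs (exp x) <> 1.
Proof.
  intros Hx. rewrite Rabs_right by (left; apply exp_pos). intro E.
  apply Hx. rewrite <- (ln_exp x), E. apply ln_1.
Qed.

Lemma lib_case c f E T :
  traveling_wave c f -> has_energy c f E -> 0 < E < 2 -> fundamental_period f T ->
  exists mu_s : R, mu_s < 0 /\
    (exists d : R, Delta_q c f T mu_s d /\ Rabs d > 2) /\
    (exists beta_s : R, 0 < beta_s /\
       RtoC mu_s = Cmult (Cmult Ci (RtoC (gam c * beta_s)))
                         (Cmult Ci (RtoC (gam c * beta_s))) /\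
       ~ in_sigmaQ c f (Cmult Ci (RtoC beta_s)) /\
       ~ in_sigmaQ c f (Cmult Ci (RtoC (- beta_s)))).
Proof.
  intros Htw Hen HE Hper.
  pose proof (gam_nz c f Htw) as Hg.
  pose proof (Henergy c f E Htw Hen) as Hen2.
  pose proof (Hf c f Htw) as Hf'. pose proof (Hy c f Htw) as Hy'.
  assert (HT : 0 < T) by apply Hper.
  set (e := E - 1) in *.
  assert (He : -1 < e < 1) by (unfold e; lra).
  set (g := gam c) in *.
  assert (HAt : exists A t, -1 < A < 1 /\ 0 < g * (e - A) /\ 0 < - t * g /\ -1/8 <= t <= 1/8).
  { destruct (Rlt_dec 0 g).
    - exists ((e - 1) / 2), (- / 8). repeat split; try lra; nra.
    - assert (g < 0) by (destruct (Rtotal_order g 0) as [|[|]]; lra).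
      exists ((e + 1) / 2), (/ 8). repeat split; try lra; nra. }
  destruct HAt as [A [t [HA [HgeA [Htg Ht]]]]].
  assert (H1A : 0 < 1 - A ^ 2) by nra.
  set (cc := sqrt (2 * g * (e - A) / (1 - A ^ 2))).
  assert (Hcc2 : cc ^ 2 = 2 * g * (e - A) / (1 - A ^ 2)).
  { replace (cc ^ 2) with (cc * cc) by ring. unfold cc. apply sqrt_sqrt.
    apply Rlt_le, Rdiv_lt_0_compat; lra. }
  assert (Hccp : 0 < cc).
  { unfold cc. apply sqrt_lt_R0, Rdiv_lt_0_compat; lra. }
  assert (Hrel : cc ^ 2 * (1 - A ^ 2) = 2 * g * (e - A)) by (rewrite Hcc2; field; lra).
  assert (Hrelm : (- cc) ^ 2 * (1 - A ^ 2) = 2 * g * (e - A)) by (rewrite <- Hrel; ring).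
  assert (HD2 : forall z, 0 < (e - A) * cos (f z) + 1 - A * e).
  { intros z. pose proof (Hen2 z) as Hz. pose proof (COS_bound (f z)).
    assert (0 <= g * (e + cos (f z))) by (pose proof (pow2_ge_0 (Derive f z)); lra).
    assert (0 <= (e - A) * (e + cos (f z))).
    { assert (0 <= (g * (e - A)) * (g * (e + cos (f z)))) by nra.
      assert (0 < g * g) by nra. nra. }
    nra. }
  set (F := fun z => Derive f z ^ 2 / ((e - A) * cos (f z) + 1 - A * e)
                     + t * (cos (f z) * Derive f z ^ 2 - g * sin (f z) ^ 2)).
  assert (HFp : forall z, 0 < F z).
  { intros z. unfold F. pose proof (HD2 z) as Dz. pose proof (Hen2 z) as Hz.
    pose proof (COS_bound (f z)) as Cb. pose proof (sin2_cos2 (f z)) as SC. unfold Rsqr in SC.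
    set (u := cos (f z)) in *. set (s := sin (f z)) in *. set (y := Derive f z) in *.
    assert (Dle : (e - A) * u + 1 - A * e <= 4).
    { assert (Rabs ((e - A) * u) <= 2).
      { rewrite Rabs_mult. assert (Rabs (e - A) <= 2) by (apply Rabs_le; lra).
        assert (Rabs u <= 1) by (apply Rabs_le; lra).
        pose proof (Rabs_pos (e - A)). pose proof (Rabs_pos u). nra. }
      assert (Rabs (A * e) <= 1).
      { rewrite Rabs_mult. assert (Rabs A <= 1) by (apply Rabs_le; lra).
        assert (Rabs e <= 1) by (apply Rabs_le; lra).
        pose proof (Rabs_pos A). pose proof (Rabs_pos e). nra. }
      pose proof (Rle_abs ((e - A) * u)). pose proof (Rle_abs (- (A * e))). rewrite Rabs_Ropp in *. lra. }
    assert (Q1 : y ^ 2 / 4 <= y ^ 2 / ((e - A) * u + 1 - A * e)).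
    { apply Rmult_le_compat_l; [apply pow2_ge_0|]. apply Rinv_le_contravar; lra. }
    assert (Q2 : - (y ^ 2) / 8 <= t * u * y ^ 2).
    { assert (Rabs (t * u) <= 1/8).
      { rewrite Rabs_mult. assert (Rabs t <= 1/8) by (apply Rabs_le; lra).
        assert (Rabs u <= 1) by (apply Rabs_le; lra).
        pose proof (Rabs_pos t). pose proof (Rabs_pos u). nra. }
      pose proof (Rle_abs (- (t * u))). rewrite Rabs_Ropp in *.
      pose proof (pow2_ge_0 y). nra. }
    destruct (Req_dec y 0) as [Hy0|Hy0].
    - assert (u = - e) by (rewrite Hy0 in Hz; simpl in Hz; nra).
      assert (0 < s * s) by nra.
      rewrite Hy0 in *. simpl. nra.
    - assert (0 < y ^ 2) by (simpl; rewrite Rmult_1_r; apply Rsqr_pos_lt; auto).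
      assert (0 <= - t * g * s ^ 2) by (apply Rmult_le_pos; [lra|apply pow2_ge_0]).
      lra. }
  assert (HFc : forall z, continuous F z).
  { intros z. apply (ex_derive_continuous (K:=R_AbsRing) (V:=R_NormedModule)). unfold F. pose proof (HD2 z). auto_derive.
    repeat match goal with
     | |- True => exact I
     | |- _ /\ _ => split
     | |- ex_derive (fun t => Derive f t) ?z => exists (- g * sin (f z)); exact (Hy' z)
     | |- ex_derive (fun t => f t) ?z => exists (Derive f z); exact (Hf' z)
     | |- _ <> _ => lra
     end. }
  destruct (antideriv F HFc) as [Phi HPhi].
  pose proof (lib_sol c f E Htw Hen A cc t Phi ltac:(lra) Hrel HD2 HPhi) as Sa.
  pose proof (lib_sol c f E Htw Hen A (- cc) t Phi ltac:(lra) Hrelm HD2 HPhi) as Sb.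
  pose proof (lib_floq c f E T Htw A cc t Phi HPhi Hper) as Fa.
  pose proof (lib_floq c f E T Htw A (- cc) t Phi HPhi Hper) as Fb.
  pose proof (lib_W c f E A cc t Phi Htw Hen ltac:(lra) Hrel HD2) as HW.
  assert (HPT : Phi 0 < Phi T) by (apply (deriv_pos_incr Phi F); auto).
  assert (Hmu : gam c * (A - (E - 1)) / 2 < 0) by (fold g e; lra).
  apply (conclude c f T _ _ _ _ _ _ _ Hmu Hg Sa Sb Fa Fb HW).
  apply exp_ne1. intro HH.
  assert (e - A <> 0) by (intro; nra).
  assert (- (e - A) / (2 * cc) <> 0).
  { unfold Rdiv. apply Rmult_integral_contrapositive_currified; [lra|].
    apply Rinv_neq_0_compat. lra. }
  apply Rmult_integral in HH. destruct HH; [auto|lra].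
Qed.

Lemma rot_case c f E T :
  traveling_wave c f -> has_energy c f E -> rotational c E -> fundamental_period f T ->
  exists mu_s : R, mu_s < 0 /\
    (exists d : R, Delta_q c f T mu_s d /\ Rabs d > 2) /\
    (exists beta_s : R, 0 < beta_s /\
       RtoC mu_s = Cmult (Cmult Ci (RtoC (gam c * beta_s)))
                         (Cmult Ci (RtoC (gam c * beta_s))) /\
       ~ in_sigmaQ c f (Cmult Ci (RtoC beta_s)) /\
       ~ in_sigmaQ c f (Cmult Ci (RtoC (- beta_s)))).
Proof.
  intros Htw Hen Hrot Hper.
  pose proof (gam_nz c f Htw) as Hg.
  pose proof (Henergy c f E Htw Hen) as Hen2.
  pose proof (Hf c f Htw) as Hf'. pose proof (Hy c f Htw) as Hy'.
  assert (HT : 0 < T) by apply Hper.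
  assert (Hge : 0 < gam c * (E - 1) /\ forall u, -1 <= u <= 1 -> 0 < gam c * (E - 1 + u)).
  { unfold gam. destruct Hrot as [[Hc HE]|[Hc HE]].
    - assert (/ (c ^ 2 - 1) < 0) by (apply Rinv_lt_0_compat; lra).
      split; [nra|]. intros u Hu. nra.
    - assert (0 < / (c ^ 2 - 1)) by (apply Rinv_0_lt_compat; lra).
      split; [nra|]. intros u Hu. nra. }
  destruct Hge as [Hge Hgeu].
  set (g := gam c) in *.
  assert (Hy2 : forall z, 0 < Derive f z ^ 2).
  { intros z. rewrite Hen2. pose proof (COS_bound (f z)). specialize (Hgeu (cos (f z))). nra. }
  assert (Hyn : forall z, Derive f z <> 0).
  { intros z HH. specialize (Hy2 z). rewrite HH in Hy2. simpl in Hy2. lra. }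
  pose proof (const_sign (Derive f) _ Hy' Hyn) as Hsg.
  assert (Hkap : exists kap, kap ^ 2 = g * (E - 1) / 2 /\ forall z, 0 < kap * Derive f z).
  { assert (Hs : 0 < sqrt (g * (E - 1) / 2)) by (apply sqrt_lt_R0; lra).
    assert (Hs2 : sqrt (g * (E - 1) / 2) ^ 2 = g * (E - 1) / 2).
    { simpl. rewrite Rmult_1_r. apply sqrt_sqrt. lra. }
    destruct (Rlt_dec 0 (Derive f 0)).
    - exists (sqrt (g * (E - 1) / 2)). split; auto. intros z. specialize (Hsg z).
      assert (0 < Derive f z) by nra. nra.
    - assert (Derive f 0 < 0) by (specialize (Hyn 0); lra).
      exists (- sqrt (g * (E - 1) / 2)). split; [rewrite <- Hs2 at 2; ring|]. intros z. specialize (Hsg z).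
      assert (Derive f z < 0) by nra. nra. }
  destruct Hkap as [kap [Hkap Hkpos]].
  assert (Hden : forall z, kap + Derive f z / 2 <> 0).
  { intros z. specialize (Hkpos z). intro HH.
    assert (kap * (kap + Derive f z / 2) = 0) by (rewrite HH; ring). nra. }
  set (H := fun z => - (g / 2) / (kap + Derive f z / 2)).
  assert (HHc : forall z, continuous H z).
  { intros z. apply (ex_derive_continuous (K:=R_AbsRing) (V:=R_NormedModule)). unfold H.
    pose proof (Hden z). auto_derive.
    repeat match goal with
     | |- True => exact I
     | |- _ /\ _ => split
     | |- ex_derive (fun t => Derive f t) ?z => exists (- g * sin (f z)); exact (Hy' z)
     | |- ex_derive (fun t => f t) ?z => exists (Derive f z); exact (Hf' z)
     | |- _ <> _ => let HH := fresh in intro HH; apply (Hden z); lra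
     end. }
  destruct (antideriv H HHc) as [h Hh].
  pose proof (rot_sol c f E Htw Hen kap h Hkap Hden Hh) as Sa.
  pose proof (rot_sol2 c f E Htw Hen kap h Hkap Hden Hh) as Sb.
  destruct (rot_floq c f T kap h Htw Hper Hh) as [C [HC Fl]].
  pose proof (rot_W c f E kap h Htw Hen Hkap (Hden 0)) as HW.
  assert (Hmu : - gam c * (E - 1) / 2 < 0) by (fold g; lra).
  apply (conclude c f T _ _ _ _ _ (C * exp (h T - h 0)) (C * exp (- (h T - h 0))) Hmu Hg Sa Sb).
  - intros z; split; apply Fl.
  - intros z; split; apply Fl.
  - rewrite HW. intro HH. rewrite HH in Hkap. simpl in Hkap. lra.
  - assert (HC1 : Rabs C = 1).
    { assert (Rabs C * Rabs C = 1) by (rewrite <- Rabs_mult; simpl in HC; rewrite Rmult_1_r in HC; rewrite HC; apply Rabs_R1).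
      pose proof (Rabs_pos C). nra. }
    rewrite Rabs_mult, HC1, Rmult_1_l. apply exp_ne1.
    destruct (mvt_all h H 0 T Hh) as [xi [_ Hxi]].
    rewrite Hxi. apply Rmult_integral_contrapositive_currified; [|lra].
    unfold H. unfold Rdiv. apply Rmult_integral_contrapositive_currified.
    + intro HH. apply Hg. lra.
    + apply Rinv_neq_0_compat. apply Hden.
Qed.

Theorem corollary3p9 (c : R) (f : R -> R) (E T : R) :
  traveling_wave c f ->
  has_energy c f E ->
  (librational E \/ rotational c E) ->
  fundamental_period f T ->
  exists mu_s : R, mu_s < 0 /\
    (exists d : R, Delta_q c f T mu_s d /\ Rabs d > 2) /\
    (exists beta_s : R, 0 < beta_s /\
       RtoC mu_s = Cmult (Cmult Ci (RtoC (gam c * beta_s)))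
                         (Cmult Ci (RtoC (gam c * beta_s))) /\
       ~ in_sigmaQ c f (Cmult Ci (RtoC beta_s)) /\
       ~ in_sigmaQ c f (Cmult Ci (RtoC (- beta_s)))).
Proof.
  intros Htw Hen [Hl|Hr] Hper.
  - apply (lib_case c f E T); auto.
  - apply (rot_case c f E T); auto.
Qed.
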